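(* Let $\mathcal{M}=(M_i\colon i\in K)$ be a family of matroids on a common ground set $E$ which admits a covering. Then for every nonempty family $(X_\alpha\colon\alpha<\kappa)$ of $\mathcal{M}$-tight sets, both $\bigcup_{\alpha<\kappa}X_\alpha$ and $\bigcap_{\alpha<\kappa}X_\alpha$ are $\mathcal{M}$-tight.
   Context: Matroids here are possibly infinite (given by independence axioms: $\emptyset$ independent, subsets of independent sets independent, the augmentation axiom relative to maximal independent sets, and that every independent subset of any $X\subseteq E$ extends to a maximal independent subset of $X$). Circuits are minimal dependent sets; $X$ spans $e$ in $M$ if $e\in X$ or some circuit $C\ni e$ has $C\setminus\{e\}\subseteq X$. For $X\subseteq E$, $M\restriction X=(X,\mathcal{I}\cap\mathcal{P}(X))$ and $\mathcal{M}\restriction X=(M_i\restriction X\colon i\in K)$. A covering of a family $(N_i\colon i\in K)$ of matroids on a set $Y$ is a family $(R_i\colon i\in K)$ with $R_i$ independent in $N_i$ and $\bigcup_i R_i=Y$. A family is tight if it admits a covering and in every covering each $R_i$ spans the whole ground set in $N_i$. A set $X\subseteq E$ is $\mathcal{M}$-tight if $\mathcal{M}\restriction X$ is tight. *)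

(* Defs.v *)
Definition pset (T : Type) := T -> Prop.

Definition subset {T} (A B : pset T) : Prop := forall x, A x -> B x.
Definition emptyset {T} : pset T := fun _ => False.
Definition add1 {T} (A : pset T) (e : T) : pset T := fun x => A x \/ x = e.
Definition del1 {T} (A : pset T) (e : T) : pset T := fun x => A x /\ x <> e.

Record matroid (T : Type) := Matroid {
  mground : pset T;
  mindep : pset T -> Prop }.
Arguments Matroid {T}.
Arguments mground {T}.
Arguments mindep {T}.

Definition maximal_indep_in {T} (M : matroid T) (X B : pset T) : Prop :=
  mindep M B /\ subset B X /\
  forall B', mindep M B' -> subset B B' -> subset B' X -> subset B' B.

Definition maximal_indep {T} (M : matroid T) (B : pset T) : Prop :=
  maximal_indep_in M (mground M) B.

Definition is_matroid {T} (M : matroid T) : Prop :=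
  (forall I, mindep M I -> subset I (mground M)) /\
  mindep M emptyset /\
  (forall I J, mindep M J -> subset I J -> mindep M I) /\
  (forall I B, mindep M I -> ~ maximal_indep M I -> maximal_indep M B ->
     exists x, B x /\ ~ I x /\ mindep M (add1 I x)) /\
  (forall X I, subset X (mground M) -> mindep M I -> subset I X ->
     exists B, subset I B /\ maximal_indep_in M X B).

Definition dependent {T} (M : matroid T) (D : pset T) : Prop :=
  subset D (mground M) /\ ~ mindep M D.

Definition circuit {T} (M : matroid T) (C : pset T) : Prop :=
  dependent M C /\ forall D, subset D C -> dependent M D -> subset C D.

Definition spans {T} (M : matroid T) (X : pset T) (e : T) : Prop :=
  X e \/ exists C, circuit M C /\ C e /\ subset (del1 C e) X.

Definition restr {T} (M : matroid T) (X : pset T) : matroid T :=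
  Matroid X (fun A => mindep M A /\ subset A X).

Definition restr_fam {T K} (M : K -> matroid T) (X : pset T) : K -> matroid T :=
  fun i => restr (M i) X.

Definition covering {T K} (N : K -> matroid T) (Y : pset T) (R : K -> pset T) : Prop :=
  (forall i, mindep (N i) (R i)) /\ (forall e, Y e <-> exists i, R i e).

Definition tight {T K} (N : K -> matroid T) (Y : pset T) : Prop :=
  (exists R, covering N Y R) /\
  forall R, covering N Y R -> forall i e, Y e -> spans (N i) (R i) e.

Definition Mtight {T K} (M : K -> matroid T) (E X : pset T) : Prop :=
  subset X E /\ tight (restr_fam M X) X.

Definition bigunion {T A} (X : A -> pset T) : pset T := fun e => exists a, X a e.
Definition bigcap {T A} (X : A -> pset T) : pset T := fun e => forall a, X a e.

(* Main.v *)
Require Import Defs.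
From Stdlib Require Import Classical IndefiniteDescription.

Lemma mat_ground {T} (M : matroid T) : is_matroid M -> forall I, mindep M I -> subset I (mground M).
Proof. intros (H&_&_&_&_). exact H. Qed.
Lemma mat_sub {T} (M : matroid T) : is_matroid M -> forall I J, mindep M J -> subset I J -> mindep M I.
Proof. intros (_&_&H&_&_). exact H. Qed.
Lemma mat_aug {T} (M : matroid T) : is_matroid M -> forall I B, mindep M I -> ~ maximal_indep M I -> maximal_indep M B ->
     exists x, B x /\ ~ I x /\ mindep M (add1 I x).
Proof. intros (_&_&_&H&_). exact H. Qed.
Lemma mat_ext {T} (M : matroid T) : is_matroid M -> forall X I, subset X (mground M) -> mindep M I -> subset I X ->
     exists B, subset I B /\ maximal_indep_in M X B.
Proof. intros (_&_&_&_&H). exact H. Qed.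

Lemma S_lemma {T} (M : matroid T) : is_matroid M -> forall W B0 N, subset W (mground M) ->
  maximal_indep M B0 -> subset B0 W -> maximal_indep_in M W N -> maximal_indep M N.
Proof.
  intros HM W B0 N HW HB0 HB0W [HN1 [HN2 HN3]].
  apply NNPP; intro Hn.
  destruct (mat_aug M HM N B0 HN1 Hn HB0) as [x [Hx1 [Hx2 Hx3]]].
  apply Hx2. apply (HN3 (add1 N x) Hx3).
  - intros z Hz; left; exact Hz.
  - intros z [Hz|Hz]; [apply HN2; exact Hz | subst; apply HB0W; exact Hx1].
  - right; reflexivity.
Qed.

Lemma RI3 {T} (M : matroid T) : is_matroid M -> forall X I y B,
  subset X (mground M) -> mindep M I -> subset I X -> X y -> ~ I y -> mindep M (add1 I y) ->
  maximal_indep_in M X B -> exists x, B x /\ ~ I x /\ mindep M (add1 I x).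
Proof.
  intros HM X I y B HX HI HIX Hy Hny HIy [HB1 [HB2 HB3]].
  destruct (mat_ext M HM (mground M) B (fun z Hz => Hz) HB1 (fun z Hz => HX z (HB2 z Hz))) as [B' [HBB' HB']].
  assert (H2 : forall z, B' z -> X z -> B z).
  { intros z Hz1 Hz2. apply (HB3 (add1 B z)).
    - apply (mat_sub M HM _ B'); [apply HB' |]. intros w [Hw|Hw]; [apply HBB'; exact Hw| subst; exact Hz1].
    - intros w Hw; left; exact Hw.
    - intros w [Hw|Hw]; [apply HB2; exact Hw| subst; exact Hz2].
    - right; reflexivity. }
  assert (HW1 : subset (fun z => I z \/ B' z) (mground M)).
  { intros z [Hz|Hz]; [apply HX, HIX, Hz | apply (proj1 (proj2 HB')); exact Hz]. }
  destruct (mat_ext M HM _ I HW1 HI (fun z Hz => or_introl Hz)) as [I' [HII' HI']].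
  assert (HI'm : maximal_indep M I') by (apply (S_lemma M HM _ B' I' HW1 HB'); [intros z Hz; right; exact Hz| exact HI']).
  destruct (classic (exists x, I' x /\ B x /\ ~ I x)) as [[x [Hx1 [Hx2 Hx3]]]|H4].
  { exists x. split; [exact Hx2|split; [exact Hx3|]].
    apply (mat_sub M HM _ I'); [apply HI'|]. intros w [Hw|Hw]; [apply HII'; exact Hw| subst; exact Hx1]. }
  assert (H4' : forall x, I' x -> B x -> I x).
  { intros x Hx1 Hx2. apply NNPP; intro Hx3. apply H4. exists x; auto. }
  clear H4.
  assert (HW2 : subset (fun z => add1 I y z \/ I' z) (mground M)).
  { intros z [[Hz|Hz]|Hz]; [apply HX, HIX, Hz| subst; apply HX, Hy | apply (proj1 (proj2 HI'm)); exact Hz]. }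
  destruct (mat_ext M HM _ (add1 I y) HW2 HIy (fun z Hz => or_introl Hz)) as [I'' [HII'' HI'']].
  assert (HI''m : maximal_indep M I'') by (apply (S_lemma M HM _ I' I'' HW2 HI'm); [intros z Hz; right; exact Hz| exact HI'']).
  set (P2 := fun z => I'' z /\ ~ X z).
  assert (HP2 : forall z, P2 z -> B' z).
  { intros z [Hz1 Hz2]. destruct (proj1 (proj2 HI'') z Hz1) as [[Hz|Hz]|Hz].
    - exfalso; apply Hz2, HIX, Hz.
    - subst; contradiction.
    - destruct (proj1 (proj2 HI') z Hz) as [Hw|Hw]; [exfalso; apply Hz2, HIX, Hw| exact Hw]. }
  assert (HW3 : subset (fun z => B z \/ I'' z) (mground M)).
  { intros z [Hz|Hz]; [apply HX, HB2, Hz | apply (proj1 (proj2 HI''m)); exact Hz]. }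
  assert (HBP : mindep M (fun z => B z \/ P2 z)).
  { apply (mat_sub M HM _ B'); [apply HB'|]. intros z [Hz|Hz]; [apply HBB', Hz| apply HP2, Hz]. }
  destruct (mat_ext M HM _ _ HW3 HBP) as [N [HN1 HN2]].
  { intros z [Hz|Hz]; [left; exact Hz| right; apply Hz]. }
  assert (HNm : maximal_indep M N) by (apply (S_lemma M HM _ I'' N HW3 HI''m); [intros z Hz; right; exact Hz| exact HN2]).
  assert (HN3 : forall z, N z -> B z \/ P2 z).
  { intros z Hz. destruct (classic (X z)) as [Hx|Hx].
    - left. apply (HB3 (add1 B z)).
      + apply (mat_sub M HM _ N); [apply HNm|]. intros w [Hw|Hw]; [apply HN1; left; exact Hw| subst; exact Hz].
      + intros w Hw; left; exact Hw.
      + intros w [Hw|Hw]; [apply HB2; exact Hw| subst; exact Hx].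
      + right; reflexivity.
    - right. destruct (proj1 (proj2 HN2) z Hz) as [Hw|Hw]; [exfalso; apply Hx, HB2, Hw| split; assumption]. }
  assert (HB'N : subset B' N).
  { apply (proj2 (proj2 HNm)); [apply HB'| | apply HB'].
    intros z Hz. destruct (HN3 z Hz) as [Hw|Hw]; [apply HBB', Hw| apply HP2, Hw]. }
  assert (HI'I'' : subset I' I'').
  { intros z Hz. destruct (classic (X z)) as [Hx|Hx].
    - destruct (proj1 (proj2 HI') z Hz) as [Hw|Hw].
      + apply HII''; left; exact Hw.
      + apply HII''; left. apply H4'; [exact Hz| apply H2; assumption].
    - destruct (proj1 (proj2 HI') z Hz) as [Hw|Hw]; [exfalso; apply Hx, HIX, Hw|].
      destruct (HN3 z (HB'N z Hw)) as [Hv|Hv]; [exfalso; apply Hx, HB2, Hv| apply Hv]. }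
  assert (HyI' : I' y).
  { apply (proj2 (proj2 HI'm) I''); [apply HI''m| exact HI'I''| apply HI''m| apply HII''; right; reflexivity]. }
  exfalso. destruct (proj1 (proj2 HI') y HyI') as [Hw|Hw]; [contradiction|].
  apply Hny, H4'; [exact HyI'| apply H2; assumption].
Qed.

Definition fc {T} (M : matroid T) (I : pset T) (e : T) : pset T :=
  fun y => y = e \/ (I y /\ mindep M (add1 (del1 I y) e)).

Lemma fc_dep {T} (M : matroid T) : is_matroid M -> forall I e,
  mindep M I -> mground M e -> ~ I e -> ~ mindep M (add1 I e) -> ~ mindep M (fc M I e).
Proof.
  intros HM I e HI He Hne Hdep Hc.
  assert (HX : subset (add1 I e) (mground M)).
  { intros z [Hz|Hz]; [apply (mat_ground M HM I HI z Hz)| subst; exact He]. }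
  destruct (mat_ext M HM _ _ HX Hc) as [B [HfB HB]].
  { intros z [Hz|[Hz _]]; [right; exact Hz| left; exact Hz]. }
  destruct (classic (exists f, I f /\ ~ B f)) as [[f [Hf1 Hf2]]|Hn].
  - assert (HIf : mindep M (del1 I f)) by (apply (mat_sub M HM _ I HI); intros z [Hz _]; exact Hz).
    destruct (RI3 M HM (add1 I e) (del1 I f) f B HX HIf) as [x [Hx1 [Hx2 Hx3]]].
    + intros z [Hz _]; left; exact Hz.
    + left; exact Hf1.
    + intros [_ H]; apply H; reflexivity.
    + apply (mat_sub M HM _ I HI). intros z [[Hz _]|Hz]; [exact Hz| subst; exact Hf1].
    + exact HB.
    + destruct (proj1 (proj2 HB) x Hx1) as [Hx|Hx].
      * apply Hx2. split; [exact Hx|]. intro; subst; contradiction.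
      * subst. apply Hf2, HfB. right. split; [exact Hf1| exact Hx3].
  - apply Hdep. apply (mat_sub M HM _ B); [apply HB|].
    intros z [Hz|Hz].
    + apply NNPP; intro Hz'. apply Hn; exists z; auto.
    + apply HfB; left; exact Hz.
Qed.

Lemma fc_sub {T} (M : matroid T) I e : subset (fc M I e) (add1 I e).
Proof. intros z [Hz|[Hz _]]; [right; exact Hz| left; exact Hz]. Qed.

Lemma fc_min {T} (M : matroid T) : is_matroid M -> forall I e, mindep M I ->
  forall D, subset D (add1 I e) -> ~ mindep M D -> forall y, fc M I e y -> D y.
Proof.
  intros HM I e HI D HD HnD y [Hy|[Hy1 Hy2]].
  - subst. apply NNPP; intro Hn. apply HnD. apply (mat_sub M HM _ I HI).
    intros z Hz. destruct (HD z Hz) as [H|H]; [exact H| subst; contradiction].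
  - apply NNPP; intro Hn. apply HnD. apply (mat_sub M HM _ _ Hy2).
    intros z Hz. destruct (HD z Hz) as [H|H]; [left; split; [exact H| intro; subst; contradiction]| right; exact H].
Qed.

Lemma stepB {T} (M : matroid T) : is_matroid M -> forall Z S B,
  subset Z (mground M) -> mindep M S ->
  (forall x, Z x -> ~ S x -> ~ mindep M (add1 (fun y => S y /\ Z y) x)) ->
  maximal_indep_in M Z B -> mindep M (fun x => B x \/ (S x /\ ~ Z x)).
Proof.
  intros HM Z S B HZ HS HSZ [HB1 [HB2 HB3]].
  apply NNPP; intro Hdep.
  set (W := fun x => B x \/ (S x /\ ~ Z x)).
  assert (HSg := mat_ground M HM S HS).
  assert (HW : subset W (mground M)).
  { intros z [Hz|[Hz _]]; [apply HZ, HB2, Hz| apply HSg, Hz]. }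
  destruct (mat_ext M HM W B HW HB1 (fun z Hz => or_introl Hz)) as [Q [HBQ HQ]].
  destruct (classic (exists s, W s /\ ~ Q s)) as [[s [Hs1 Hs2]]|Hn].
  2:{ apply Hdep. apply (mat_sub M HM _ Q); [apply HQ|]. intros z Hz. apply NNPP; intro H; apply Hn; exists z; auto. }
  assert (Hs3 : S s /\ ~ Z s).
  { destruct Hs1 as [H|H]; [exfalso; apply Hs2, HBQ, H| exact H]. }
  set (U := fun x => B x \/ S x).
  assert (HU : subset U (mground M)).
  { intros z [Hz|Hz]; [apply HZ, HB2, Hz| apply HSg, Hz]. }
  assert (HQU : maximal_indep_in M U Q).
  { split; [apply HQ|]. split.
    - intros z Hz. destruct (proj1 (proj2 HQ) z Hz) as [H|[H _]]; [left; exact H| right; exact H].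
    - intros Q'' HQ''1 HQ''2 HQ''3. apply (proj2 (proj2 HQ)); [exact HQ''1| exact HQ''2|].
      intros x Hx. destruct (classic (Z x)) as [Hz|Hz].
      + left. apply (HB3 (add1 B x)).
        * apply (mat_sub M HM _ Q'' HQ''1). intros w [Hw|Hw]; [apply HQ''2, HBQ, Hw| subst; exact Hx].
        * intros w Hw; left; exact Hw.
        * intros w [Hw|Hw]; [apply HB2, Hw| subst; exact Hz].
        * right; reflexivity.
      + destruct (HQ''3 x Hx) as [H|H]; [left; exact H| right; split; assumption]. }
  set (L := fun x => (S x /\ Z x) \/ (Q x /\ ~ Z x)).
  assert (HLS : subset L S).
  { intros z [[Hz _]|[Hz1 Hz2]]; [exact Hz|].
    destruct (proj1 (proj2 HQ) z Hz1) as [H|[H _]]; [exfalso; apply Hz2, HB2, H| exact H]. }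
  destruct (RI3 M HM U L s Q HU) as [x [Hx1 [Hx2 Hx3]]].
  - apply (mat_sub M HM _ S HS HLS).
  - intros z Hz. right. apply HLS, Hz.
  - right; apply Hs3.
  - intros [[_ H]|[H _]]; [apply (proj2 Hs3), H| apply Hs2, H].
  - apply (mat_sub M HM _ S HS). intros z [Hz|Hz]; [apply HLS, Hz| subst; apply Hs3].
  - exact HQU.
  - destruct (classic (Z x)) as [Hz|Hz].
    + assert (HnS : ~ S x) by (intro H; apply Hx2; left; split; assumption).
      apply (HSZ x Hz HnS). apply (mat_sub M HM _ _ Hx3).
      intros w [Hw|Hw]; [left; left; exact Hw| right; exact Hw].
    + apply Hx2. right. split; assumption.
Qed.

Lemma circ_restr_mono {T} (N : matroid T) X Y C :
  circuit (restr N X) C -> subset X Y -> circuit (restr N Y) C.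
Proof.
  intros [[HC1 HC2] HC3] HXY. split.
  - split; [intros z Hz; apply HXY, HC1, Hz| intros [H _]; apply HC2; split; [exact H| exact HC1]].
  - intros D HD [HD1 HD2]. apply HC3; [exact HD|]. split.
    + intros z Hz; apply HC1, HD, Hz.
    + intros [H1 H2]. apply HD2; split; [exact H1| exact HD1].
Qed.

Lemma circ_restr_dep {T} (N : matroid T) X C : circuit (restr N X) C -> subset C X /\ ~ mindep N C.
Proof. intros [[HC1 HC2] _]. split; [exact HC1| intro H; apply HC2; split; assumption]. Qed.

Theorem proposition3p6 (T : Type) (E : pset T) (K : Type) (M : K -> matroid T)
  (HM : forall i, is_matroid (M i))
  (HE : forall i x, mground (M i) x <-> E x)
  (Hcov : exists R, covering M E R)
  (A : Type) (a0 : A) (X : A -> pset T)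
  (HX : forall a, Mtight M E (X a)) :
  Mtight M E (bigunion X) /\ Mtight M E (bigcap X).
Proof.
  assert (Hcovsub : forall Y, subset Y E -> covering (restr_fam M Y) Y (fun k x => proj1_sig (constructive_indefinite_description _ Hcov) k x /\ Y x)).
  { intros Y HY. destruct (constructive_indefinite_description _ Hcov) as [S [HS1 HS2]]; simpl. split.
    - intros k. split; [apply (mat_sub _ (HM k) _ (S k) (HS1 k)); intros z [Hz _]; exact Hz| intros z [_ Hz]; exact Hz].
    - intros e. split; [intro He; destruct (proj1 (HS2 e) (HY e He)) as [k Hk]; exists k; split; assumption|].
      intros [k [_ Hk]]; exact Hk. }
  assert (HXE : forall a, subset (X a) E) by (intro a; apply (HX a)).
  split.
  - assert (HYE : subset (bigunion X) E) by (intros z [a Ha]; apply (HXE a), Ha).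
    split; [exact HYE|]. split; [eexists; apply (Hcovsub _ HYE)|].
    intros R [HR1 HR2] i e [a Ha].
    assert (Hc : covering (restr_fam M (X a)) (X a) (fun k x => R k x /\ X a x)).
    { split.
      - intros k. split; [apply (mat_sub _ (HM k) _ (R k) (proj1 (HR1 k))); intros z [Hz _]; exact Hz| intros z [_ Hz]; exact Hz].
      - intros x. split; [intro Hx; destruct (proj1 (HR2 x) (ex_intro _ a Hx)) as [k Hk]; exists k; split; assumption|].
        intros [k [_ Hk]]; exact Hk. }
    destruct (proj2 (proj2 (HX a)) _ Hc i e Ha) as [[H _]|[C [HC1 [HC2 HC3]]]]; [left; exact H| right].
    exists C. split; [apply (circ_restr_mono _ (X a)); [exact HC1| intros z Hz; exists a; exact Hz]|].
    split; [exact HC2| intros z Hz; apply (HC3 z Hz)].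
  - set (Z := bigcap X).
    assert (HZX : forall a, subset Z (X a)) by (intros a z Hz; apply Hz).
    assert (HZE : subset Z E) by (intros z Hz; apply (HXE a0), Hz).
    split; [exact HZE|]. split; [eexists; apply (Hcovsub _ HZE)|].
    intros R [HR1 HR2] i e He. apply NNPP; intro Hns.
    assert (Hne : ~ R i e) by (intro H; apply Hns; left; exact H).
    assert (HRi : mindep (M i) (R i)) by apply (HR1 i).
    assert (HRiZ : subset (R i) Z) by apply (HR1 i).
    assert (Hge : forall k x, Z x -> mground (M k) x) by (intros k x Hx; apply HE, HZE, Hx).
    assert (Hind : mindep (M i) (add1 (R i) e)).
    { apply NNPP; intro Hd. apply Hns. right. exists (fc (M i) (R i) e).
      split; [|split; [left; reflexivity| intros z [[Hz|[Hz _]] Hz']; [contradiction| exact Hz]]].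
      split.
      - split.
        + intros z Hz. destruct (fc_sub _ _ _ z Hz) as [H|H]; [apply HRiZ, H| subst; exact He].
        + intros [H _]. apply (fc_dep _ (HM i) (R i) e HRi (Hge i e He) Hne Hd H).
      - intros D HD [_ HD2]. intros y Hy. apply (fc_min _ (HM i) (R i) e HRi D).
        + intros z Hz; exact (fc_sub _ _ _ z (HD z Hz)).
        + intro H; apply HD2; split; [exact H| intros z Hz; simpl].
          destruct (fc_sub _ _ _ z (HD z Hz)) as [H'|H']; [apply HRiZ, H'| subst; exact He].
        + exact Hy. }
    destruct (proj1 (HR2 e) He) as [j Hj].
    assert (Hij : i <> j) by (intro; subst; contradiction).
    destruct Hcov as [S [HS1 HS2]].
    assert (stepA : forall k x, Z x -> ~ S k x -> ~ mindep (M k) (add1 (fun y => S k y /\ Z y) x)).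
    { intros k x Hx Hnx Hind'.
      assert (Hsp : forall a, exists C, circuit (restr (M k) (X a)) C /\ C x /\ subset (del1 C x) (fun y => S k y /\ X a y)).
      { intros a.
        assert (Hc : covering (restr_fam M (X a)) (X a) (fun k x => S k x /\ X a x)).
        { split.
          - intros k'. split; [apply (mat_sub _ (HM k') _ (S k') (HS1 k')); intros z [Hz _]; exact Hz| intros z [_ Hz]; exact Hz].
          - intros y. split; [intro Hy; destruct (proj1 (HS2 y) (HXE a y Hy)) as [k' Hk]; exists k'; split; assumption|].
            intros [k' [_ Hk]]; exact Hk. }
        destruct (proj2 (proj2 (HX a)) _ Hc k x (HZX a x Hx)) as [[H _]|H]; [contradiction| exact H]. }
      assert (Hdep : ~ mindep (M k) (add1 (S k) x)).
      { destruct (Hsp a0) as [C [HC1 [HC2 HC3]]]. intro H. apply (proj2 (circ_restr_dep _ _ _ HC1)).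
        apply (mat_sub _ (HM k) _ _ H). intros z Hz. destruct (classic (z = x)) as [E1|E1]; [right; exact E1|].
        left. apply (HC3 z). split; assumption. }
      apply (fc_dep _ (HM k) (S k) x (HS1 k) (Hge k x Hx) Hnx Hdep).
      apply (mat_sub _ (HM k) _ _ Hind').
      intros y Hy. destruct (classic (y = x)) as [E1|E1]; [right; exact E1|]. left.
      destruct Hy as [Hy|[Hy Hy2]]; [contradiction|]. split; [exact Hy|].
      intros a. destruct (Hsp a) as [C [HC1 [HC2 HC3]]].
      assert (HCy : C y).
      { apply (fc_min _ (HM k) (S k) x (HS1 k) C).
        - intros z Hz. destruct (classic (z = x)) as [E2|E2]; [right; exact E2|]. left. apply (HC3 z). split; assumption.
        - apply (circ_restr_dep _ _ _ HC1).
        - right. split; [exact Hy|]. assumption. }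
      apply (proj1 (circ_restr_dep _ _ _ HC1)), HCy. }
    set (R' := fun k x => R k x \/ (k = i /\ x = e)).
    assert (HB : forall k, exists B, subset (R' k) B /\ maximal_indep_in (M k) Z B).
    { intros k. apply (mat_ext _ (HM k)).
      - intros z Hz; apply Hge, Hz.
      - destruct (classic (k = i)) as [Hk|Hk].
        + subst. apply (mat_sub _ (HM i) _ _ Hind). intros z [Hz|[_ Hz]]; [left; exact Hz| right; exact Hz].
        + apply (mat_sub _ (HM k) _ _ (proj1 (HR1 k))). intros z [Hz|[Hz _]]; [exact Hz| contradiction].
      - intros z [Hz|[_ Hz]]; [apply (proj2 (HR1 k)), Hz| subst; exact He]. }
    set (Bf := fun k => proj1_sig (constructive_indefinite_description _ (HB k))).
    assert (HBf : forall k, subset (R' k) (Bf k) /\ maximal_indep_in (M k) Z (Bf k)).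
    { intros k. unfold Bf. destruct (constructive_indefinite_description _ (HB k)) as [B HB']. exact HB'. }
    set (Xa := X a0).
    set (Tf := fun k x => Bf k x \/ ((S k x /\ Xa x) /\ ~ Z x)).
    assert (HT : forall k, mindep (M k) (Tf k)).
    { intros k. apply (stepB _ (HM k) Z (fun x => S k x /\ Xa x) (Bf k)).
      - intros z Hz; apply Hge, Hz.
      - apply (mat_sub _ (HM k) _ _ (HS1 k)). intros z [Hz _]; exact Hz.
      - intros x Hx Hn Hi. apply (stepA k x Hx).
        + intro H; apply Hn; split; [exact H| apply HZX, Hx].
        + apply (mat_sub _ (HM k) _ _ Hi). intros z [[Hz1 Hz2]|Hz]; [left; split; [split; [exact Hz1| apply HZX, Hz2]| exact Hz2]| right; exact Hz].
      - apply HBf. }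
    set (T' := fun k x => Tf k x /\ ~ (k = j /\ x = e)).
    assert (HTj : Tf j e) by (left; apply HBf; left; exact Hj).
    assert (Hc : covering (restr_fam M Xa) Xa T').
    { split.
      - intros k. split; [apply (mat_sub _ (HM k) _ _ (HT k)); intros z [Hz _]; exact Hz|].
        intros z [[Hz|[[_ Hz] _]] _]; [apply HZX, (proj1 (proj2 (proj2 (HBf k)))), Hz| exact Hz].
      - intros x. split.
        + intro Hx. destruct (classic (Z x)) as [Hz|Hz].
          * destruct (classic (x = e)) as [Hxe|Hxe].
            -- subst. exists i. split; [left; apply HBf; right; split; reflexivity| intros [H _]; contradiction].
            -- destruct (proj1 (HR2 x) Hz) as [k Hk]. exists k. split; [left; apply HBf; left; exact Hk| intros [_ H]; contradiction].
          * destruct (proj1 (HS2 x) (HXE a0 x Hx)) as [k Hk]. exists k. split; [right; split; [split; assumption| exact Hz]|].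
            intros [_ H]; subst; contradiction.
        + intros [k [[Hz|[[_ Hz] _]] _]]; [apply HZX, (proj1 (proj2 (proj2 (HBf k)))), Hz| exact Hz]. }
    destruct (proj2 (proj2 (HX a0)) _ Hc j e (HZX a0 e He)) as [[_ H]|[C [HC1 [HC2 HC3]]]]; [apply H; split; reflexivity|].
    apply (proj2 (circ_restr_dep _ _ _ HC1)). apply (mat_sub _ (HM j) _ _ (HT j)).
    intros z Hz. destruct (classic (z = e)) as [E1|E1]; [subst; exact HTj|].
    apply (HC3 z). split; assumption.
Qed.
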